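(* Let $A=(a,\ ha+d,\ ha+3d,\ ha+5d,\ \dots,\ ha+(2k+1)d)$ where $\gcd(a,d)=1$, $a,h,d,k\in\mathbb{P}$, $a>2$, $d>h$, $1\le 2k+1\le a-1$. Write $a-1=(2k+1)s+t$ with $1\le t\le 2k+1$. Then \begin{align*} \sum_{r=0}^{a-1}x^{N_r}&=1+\frac{x^{ha+d}\big(1-x^{(ha+(2k+1)d)s}\big)\big(1-x^{2d(k+1)}\big)}{(1-x^{ha+(2k+1)d})(1-x^{2d})}+\frac{x^{2ha+2d}\big(1-x^{(ha+(2k+1)d)s}\big)\big(1-x^{2dk}\big)}{(1-x^{ha+(2k+1)d})(1-x^{2d})}+f_1(x), \end{align*} where $$f_1(x)=\begin{cases}\dfrac{x^{ha(s+1)+d((2k+1)s+1)}\big(1-x^{d(t+1)}\big)}{1-x^{2d}}+\dfrac{x^{ha(s+2)+d((2k+1)s+2)}\big(1-x^{d(t-1)}\big)}{1-x^{2d}} & \text{if } t \text{ is odd},\\[8pt] \dfrac{x^{ha(s+1)+d((2k+1)s+1)}\big(1-x^{dt}\big)}{1-x^{2d}}+\dfrac{x^{ha(s+2)+d((2k+1)s+2)}\big(1-x^{dt}\big)}{1-x^{2d}} & \text{if } t \text{ is even}.\end{cases}$$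
   Context: For $A=(a,c_1,\dots,c_m)$ of positive integers with $\gcd(A)=1$ and $0\le r\le a-1$, $N_r$ is the least nonnegative integer $a_0\equiv r\pmod a$ that can be written as $\sum_{i=1}^m c_ix_i$ with all $x_i$ nonnegative integers. $\mathbb{P}=\{1,2,\dots\}$. *)

(* Defs.v *)
From HB Require Import structures.
From mathcomp Require Import all_boot all_order all_algebra fraction.
From Stdlib Require Import ClassicalEpsilon.
Set Implicit Arguments. Unset Strict Implicit. Unset Printing Implicit Defensive.

Definition representable (cs : seq nat) (n : nat) : Prop :=
  exists x : 'I_(size cs) -> nat, n = \sum_(i < size cs) nth 0 cs i * x i.

Definition decP (P : Prop) : bool :=
  if excluded_middle_informative P then true else false.

Definition Ncand (a : nat) (cs : seq nat) (r : nat) : pred nat :=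
  fun n => decP (n = r %[mod a] /\ representable cs n).

(* N_r = least such a0 (defaults to 0 if none exists; cannot happen when gcd = 1) *)
Definition Nr (a : nat) (cs : seq nat) (r : nat) : nat :=
  match excluded_middle_informative (exists n, Ncand a cs r n) with
  | left H => ex_minn H
  | right _ => 0
  end.

Definition gens (a h d k : nat) : seq nat :=
  [seq h * a + (2 * j + 1) * d | j <- iota 0 k.+1].

(* Main.v *)
Require Import Defs.
From HB Require Import structures.
From mathcomp Require Import all_boot all_order all_algebra fraction.
From mathcomp Require Import zify ring.
From Stdlib Require Import ClassicalEpsilon.
Import GRing.Theory.
Local Open Scope ring_scope.

Local Close Scope ring_scope.

Lemma mod_cancel a d q m : coprime a d -> q * d = m * d %[mod a] -> q = m %[mod a].
Proof.
move=> co.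
wlog le : q m / m <= q.
  move=> W; case: (leqP m q) => [|/ltnW] H E; first exact: W.
  by symmetry; apply: W => //; symmetry.
move=> /eqP; rewrite eqn_mod_dvd ?leq_mul2r ?le ?orbT // -mulnBl Gauss_dvdl //.
by rewrite -eqn_mod_dvd // => /eqP.
Qed.

Lemma decPE (P : Prop) : Defs.decP P = true <-> P.
Proof. by rewrite /Defs.decP; case: excluded_middle_informative. Qed.

Lemma Nr_eq a cs r n0 : Ncand a cs r n0 -> (forall n, Ncand a cs r n -> n0 <= n) ->
  Nr a cs r = n0.
Proof.
move=> H0 Hmin; rewrite /Nr; case: excluded_middle_informative => [E|NE]; last first.
  by exfalso; apply: NE; exists n0.
case: ex_minnP => m Hm Hm'; apply/eqP; rewrite eqn_leq Hm' // Hmin //.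
Qed.

Section Comb.
Variables a h d k : nat.
Local Notation K := (2 * k + 1).
Local Notation cs := (gens a h d k).

Lemma gens_size : size cs = k.+1.
Proof. by rewrite size_map size_iota. Qed.

Lemma gens_nth j : j < k.+1 -> nth 0 cs j = h * a + (2 * j + 1) * d.
Proof. by move=> hj; rewrite (nth_map 0) ?size_iota // nth_iota. Qed.

Lemma rep0 : representable cs 0.
Proof. by exists (fun _ => 0); rewrite big1 // => i _; rewrite muln0. Qed.

Lemma repS n j : representable cs n -> j < size cs -> representable cs (n + nth 0 cs j).
Proof.
move=> [x ->] hj; exists (fun i => x i + (val i == j)).
have -> : \sum_(i < size cs) nth 0 cs i * (x i + (val i == j)) =
  \sum_(i < size cs) (nth 0 cs i * x i + nth 0 cs i * (val i == j)).
  by apply: eq_bigr => i _; rewrite mulnDr.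
rewrite big_split /=; congr (_ + _).
rewrite (bigD1 (Ordinal hj)) //= eqxx muln1 big1 ?addn0 // => i hi.
suff /negbTE -> : val i != j by rewrite muln0.
by apply: contra hi => /eqP E; apply/eqP; apply: val_inj.
Qed.


Lemma rep_ok p : forall q, p <= q <= K * p -> odd p = odd q ->
  representable cs (p * (h * a) + q * d).
Proof.
elim: p => [|p IH] q.
  move=> /andP[_]; rewrite muln0 leqn0 => /eqP -> _; rewrite !mul0n; exact: rep0.
move=> Hq Hpar.
set j := (minn K (q - p))./2.
have Hj : 2 * j + 1 = minn K (q - p) by rewrite /j; lia.
set q' := q - (2 * j + 1).
have Eq : q = q' + (2 * j + 1) by rewrite /q'; lia.
have Hr := IH q' ltac:(rewrite /q'; lia) ltac:(rewrite /q'; lia).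
have hjs : j < size cs by rewrite gens_size; lia.
have := repS _ _ Hr hjs; rewrite gens_nth; last by lia.
have -> : p.+1 * (h * a) + q * d = p * (h * a) + q' * d + (h * a + (2 * j + 1) * d).
  by rewrite Eq; lia.
done.
Qed.

Lemma rep_inv N : representable cs N ->
  exists p r, N = p * (h * a) + (p + 2 * r) * d /\ r <= k * p.
Proof.
move=> [x ->].
exists (\sum_(i < size cs) x i), (\sum_(i < size cs) i * x i); split.
  have -> : \sum_(i < size cs) nth 0 cs i * x i =
     \sum_(i < size cs) ((h * a + d) * x i + 2 * d * (i * x i)).
    apply: eq_bigr => i _; rewrite gens_nth; first by lia.
    by rewrite -gens_size; exact: ltn_ord.
  rewrite big_split /= -!big_distrr /=; lia.
rewrite big_distrr /=; apply: leq_sum => i _; rewrite leq_mul2r.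
have : i < k.+1 by rewrite -gens_size; exact: ltn_ord.
by rewrite ltnS => ->; rewrite orbT.
Qed.


Definition nm m := if m is m'.+1 then m' %/ K + 1 + odd (m' %% K) else 0.
Definition vm m := nm m * h * a + m * d.

Lemma decomp m' : exists i jj, m' = i * K + jj /\ jj < K /\ m' %/ K = i /\ m' %% K = jj.
Proof.
exists (m' %/ K), (m' %% K); split; first exact: divn_eq.
by rewrite ltn_pmod; last lia.
Qed.

Lemma nm_ok m : nm m <= m <= K * nm m /\ odd (nm m) = odd m.
Proof.
case: m => [|m'] //=.
have [i [jj [E [lt [-> ->]]]]] := decomp m'.
rewrite E; lia.
Qed.

Lemma nm_min m p q : m <= q -> (q = m \/ m + K + 1 <= q) -> q <= K * p ->
  odd p = odd q -> nm m <= p.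
Proof.
case: m => [|m'] //= hmq Hq hqp hpar.
have [i [jj [E [lt [-> ->]]]]] := decomp m'.
rewrite E in hmq Hq.
case: Hq => [Eq|Hq].
  have hip : i < p.
    rewrite ltnNge; apply/negP => hp; have := leq_mul (leqnn K) hp; lia.
  lia.
have hip : i.+1 < p.
  rewrite ltnNge; apply/negP => hp; have := leq_mul (leqnn K) hp; lia.
lia.
Qed.

Lemma Nr_char m : 0 < a -> coprime a d -> K + 1 <= a -> m < a ->
  Nr a cs ((m * d) %% a) = vm m.
Proof.
move=> a0 co Ka ma; apply: Nr_eq.
  apply/decPE; split.
    by rewrite /vm modn_mod modnMDl.
  rewrite /vm -mulnA; have [h1 h2] := nm_ok m; apply: rep_ok => //.
move=> n /decPE [Hmod Hrep].
have [p [r [En hr]]] := rep_inv _ Hrep; subst n.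
set q := p + 2 * r.
rewrite modn_mod mulnA modnMDl in Hmod.
have Hq : q %% a = m by rewrite (@mod_cancel a d q m co Hmod) modn_small.
have Eq := divn_eq q a; rewrite Hq in Eq.
have [hmq Hq2] : m <= q /\ (q = m \/ m + K + 1 <= q).
  case: (posnP (q %/ a)) => [w0|wpos].
    by rewrite Eq w0 mul0n add0n; split; [|left].
  have := leq_pmull a wpos; lia.
have hp := @nm_min m p q hmq Hq2 ltac:(rewrite /q; lia) ltac:(rewrite /q; lia).
rewrite /vm -mulnA; apply: leq_add; apply: leq_mul => //.
Qed.

End Comb.

Local Open Scope ring_scope.

Definition G {R : comNzRingType} (y : R) (n : nat) : R := \sum_(u < n) y ^+ u.

Section Alg.
Variables (a h d k : nat) (R : comNzRingType) (x : R).
Local Notation K := (2 * k + 1)%N.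
Local Notation L := (h * a + (2 * k + 1) * d)%N.

Definition P i j := x ^+ (i * L) * (x ^+ (h * a + d) * G (x ^+ (2 * d)) (uphalf j)
   + x ^+ (2 * h * a + 2 * d) * G (x ^+ (2 * d)) j./2).

Lemma nmE i j : (j < K)%N -> nm k (i * K + j + 1) = (i + 1 + odd j)%N.
Proof.
move=> hj; rewrite addn1 /= divnMDl; last by lia.
by rewrite modnMDl divn_small // modn_small // addn0.
Qed.

Lemma P0 i : P i 0 = 0.
Proof. by rewrite /P /G /= !big_ord0 !mulr0 addr0 mulr0. Qed.

Lemma Pstep i j : (j < K)%N -> P i j.+1 = P i j + x ^+ (vm a h d k (i * K + j + 1)).
Proof.
move=> hj; rewrite /vm nmE // /P /G.
case Ho : (odd j).
  have -> : uphalf j.+1 = uphalf j by lia.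
  have -> : (j.+1)./2 = (j./2).+1 by lia.
  rewrite big_ord_recr /=.
  have -> : x ^+ ((i + 1 + true) * h * a + (i * K + j + 1) * d) =
     x ^+ (i * L) * (x ^+ (2 * h * a + 2 * d) * (x ^+ (2 * d)) ^+ j./2).
    rewrite -exprM -!exprD; congr (x ^+ _).
    have Ej : j = (2 * j./2 + 1)%N by lia.
    set u := j./2 in Ej *; rewrite Ej; lia.
  ring.
have -> : uphalf j.+1 = (uphalf j).+1 by lia.
have -> : (j.+1)./2 = j./2 by lia.
rewrite big_ord_recr /=.
have -> : x ^+ ((i + 1 + false) * h * a + (i * K + j + 1) * d) =
   x ^+ (i * L) * (x ^+ (h * a + d) * (x ^+ (2 * d)) ^+ uphalf j).
  rewrite -exprM -!exprD; congr (x ^+ _).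
  have Ej : j = (2 * uphalf j)%N by lia.
  set u := uphalf j in Ej *; rewrite Ej; lia.
ring.
Qed.

Lemma blocks i : forall j, (j <= K)%N ->
  \sum_(m < i * K + j + 1) x ^+ (vm a h d k m) = 1 + \sum_(i' < i) P i' K + P i j.
Proof.
elim: i => [|i IH] j.
  elim: j => [|j IHj] hj.
    rewrite big_ord_recr big_ord0 /= P0 big_ord0 /vm /=.
    have -> : (0 * h * a + 0 * d = 0)%N by lia.
    by rewrite expr0 add0r !addr0.
  rewrite (_ : (0 * K + j.+1 + 1 = (0 * K + j + 1).+1)%N); last by lia.
  by rewrite big_ord_recr /= IHj ?Pstep //; try ring; lia.
elim: j => [|j IHj] hj.
  rewrite (_ : (i.+1 * K + 0 + 1 = i * K + K + 1)%N); last by lia.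
  by rewrite IH // big_ord_recr /= P0; ring.
rewrite (_ : (i.+1 * K + j.+1 + 1 = (i.+1 * K + j + 1).+1)%N); last by lia.
by rewrite big_ord_recr /= IHj ?Pstep //; try ring; lia.
Qed.

End Alg.


Lemma geoE {R : comNzRingType} (y : R) n : (1 - y) * G y n = 1 - y ^+ n.
Proof.
rewrite /G; elim: n => [|n IH]; first by rewrite big_ord0 expr0 mulr0 subrr.
by rewrite big_ord_recr /= mulrDr IH exprS; ring.
Qed.

Definition xF : {fraction {poly rat}} := @FracField.tofrac {poly rat} 'X.

Lemma oneBx_neq0 c : (0 < c)%N -> 1 - xF ^+ c != 0.
Proof.
move=> c0; rewrite /xF -tofracXn -tofrac1 -tofracB tofrac_eq0 subr_eq0.
apply/negP => /eqP H; have := congr1 (fun p : {poly rat} => size p) H; rewrite /=.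
rewrite size_polyXn size_poly1; lia.
Qed.

Lemma div2E (A y z : {fraction {poly rat}}) n m : 1 - y != 0 -> 1 - z != 0 ->
  A * (1 - y ^+ n) * (1 - z ^+ m) / ((1 - y) * (1 - z)) = A * G y n * G z m.
Proof.
move=> hy hz. rewrite -(geoE y n) -(geoE z m).
have -> : A * ((1 - y) * G y n) * ((1 - z) * G z m) = A * G y n * G z m * ((1 - y) * (1 - z)) by ring.
have hD : (1 - y) * (1 - z) != 0 := mulf_neq0 hy hz.
exact: (mulfK hD).
Qed.

Lemma div1E (A y : {fraction {poly rat}}) n : 1 - y != 0 ->
  A * (1 - y ^+ n) / (1 - y) = A * G y n.
Proof. move=> hy; rewrite -(geoE y n).
have -> : A * ((1 - y) * G y n) = A * G y n * (1 - y) by ring.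
exact: (mulfK hy). Qed.

Theorem mainTheorem15 (a h d k s t : nat) :
  coprime a d -> (0 < h)%N -> (0 < d)%N -> (0 < k)%N ->
  (2 < a)%N -> (h < d)%N -> (1 <= 2 * k + 1 <= a - 1)%N ->
  (a - 1 = (2 * k + 1) * s + t)%N -> (1 <= t <= 2 * k + 1)%N ->
  let x : {fraction {poly rat}} := @FracField.tofrac {poly rat} 'X in
  let L := (h * a + (2 * k + 1) * d)%N in
  let f1 :=
    if odd t then
      x ^+ (h * a * s.+1 + d * ((2 * k + 1) * s + 1)) * (1 - x ^+ (d * t.+1))
        / (1 - x ^+ (2 * d))
      + x ^+ (h * a * s.+2 + d * ((2 * k + 1) * s + 2)) * (1 - x ^+ (d * t.-1))
        / (1 - x ^+ (2 * d))
    else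
      x ^+ (h * a * s.+1 + d * ((2 * k + 1) * s + 1)) * (1 - x ^+ (d * t))
        / (1 - x ^+ (2 * d))
      + x ^+ (h * a * s.+2 + d * ((2 * k + 1) * s + 2)) * (1 - x ^+ (d * t))
        / (1 - x ^+ (2 * d)) in
  \sum_(r < a) x ^+ (Nr a (gens a h d k) r)
  = 1
    + x ^+ (h * a + d) * (1 - x ^+ (L * s)) * (1 - x ^+ (2 * d * k.+1))
      / ((1 - x ^+ L) * (1 - x ^+ (2 * d)))
    + x ^+ (2 * h * a + 2 * d) * (1 - x ^+ (L * s)) * (1 - x ^+ (2 * d * k))
      / ((1 - x ^+ L) * (1 - x ^+ (2 * d)))
    + f1.
Proof.
move=> co h0 d0 k0 a2 hd HK Ea Ht x L f1.
have a0 : (0 < a)%N by lia.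
have Ka : (2 * k + 1 + 1 <= a)%N by lia.
have inj : injective (fun m : 'I_a => Ordinal (ltn_pmod (m * d) a0)).
  move=> m1 m2 /(congr1 val) /= E; apply: val_inj => /=.
  by have := @mod_cancel a d m1 m2 co E; rewrite !modn_small.
rewrite (reindex_inj inj) /=.
rewrite (eq_bigr (fun m : 'I_a => x ^+ (vm a h d k m))); last first.
  by move=> m _; rewrite Nr_char.
have S := @blocks a h d k _ x s t ltac:(lia).
have Ea' : (s * (2 * k + 1) + t + 1 = a)%N by lia.
rewrite Ea' in S; rewrite S.
have ha0 : (0 < h * a)%N by rewrite muln_gt0 h0 a0.
have hL : 1 - x ^+ L != 0 by apply: oneBx_neq0; rewrite /L; lia.
have h2 : 1 - x ^+ (2 * d) != 0 by apply: oneBx_neq0; lia.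
rewrite [x ^+ (L * s)]exprM [x ^+ (2 * d * k.+1)]exprM [x ^+ (2 * d * k)]exprM.
rewrite (div2E _ _ _ _ _ hL h2) (div2E _ _ _ _ _ hL h2).
rewrite /f1 /P.
have -> : uphalf (2 * k + 1) = k.+1 by lia.
have -> : (2 * k + 1)./2 = k by lia.
rewrite -big_distrl /=.
have -> : \sum_(i' < s) x ^+ (i' * (h * a + (2 * k + 1) * d)) = G (x ^+ L) s.
  by rewrite /G; apply: eq_bigr => i _; rewrite mulnC exprM.
have -> : x ^+ (h * a * s.+1 + d * ((2 * k + 1) * s + 1)) = x ^+ (s * L) * x ^+ (h * a + d).
  by rewrite -exprD; congr (x ^+ _); rewrite /L; lia.
have -> : x ^+ (h * a * s.+2 + d * ((2 * k + 1) * s + 2)) = x ^+ (s * L) * x ^+ (2 * h * a + 2 * d).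
  by rewrite -exprD; congr (x ^+ _); rewrite /L; lia.
case: ifP => Ho.
  have [u Et] : exists u, t = (2 * u + 1)%N by exists t./2; lia.
  have -> : (d * t.+1 = 2 * d * uphalf t)%N.
    rewrite Et (_ : uphalf (2 * u + 1) = u.+1); lia.
  have -> : (d * t.-1 = 2 * d * t./2)%N.
    rewrite Et (_ : (2 * u + 1)./2 = u); lia.
  rewrite [x ^+ (2 * d * uphalf t)]exprM [x ^+ (2 * d * t./2)]exprM.
  rewrite (div1E _ _ _ h2) (div1E _ _ _ h2).
  ring.
have [u Et] : exists u, t = (2 * u)%N by exists t./2; lia.
rewrite {1}(_ : (d * t = 2 * d * uphalf t)%N); last first.
  rewrite Et (_ : uphalf (2 * u) = u); lia.
rewrite (_ : (d * t = 2 * d * t./2)%N); last first.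
  rewrite Et (_ : (2 * u)./2 = u); lia.
rewrite [x ^+ (2 * d * uphalf t)]exprM [x ^+ (2 * d * t./2)]exprM.
rewrite (div1E _ _ _ h2) (div1E _ _ _ h2).
ring.
Qed.
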